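(* (a) Let $x\in P$ and $(y,v')\in\mathcal{P}$ with $x\neq y$ and $v'\in x'^{\perp}$ in $S'$. Then $|\{x,(y,v')\}^{\perp}|\geq 3$ in $\mathbb{S}$. (b) Let $u'\in P'$ and $(y,v')\in\mathcal{P}$ with $u'\neq v'$ and $y\in u^{\perp}$ in $S$. Then $|\{u',(y,v')\}^{\perp}|\geq 3$ in $\mathbb{S}$.
   Context: Let $S=(P,L)$ and $S'=(P',L')$ be generalized quadrangles of order $(2,2)$ (every line has 3 points, every point lies on 3 lines, and for each point $x$ and line $l\not\ni x$ exactly one point of $l$ is collinear with $x$), with an isomorphism $x\mapsto x'$ from $S$ to $S'$ (write $u$ for the preimage of $u'\in P'$). In a point-line geometry, $x^{\perp}$ is $x$ together with all points collinear with $x$, and $A^{\perp}=\bigcap_{a\in A}a^{\perp}$. A triad is a set of three pairwise non-collinear points, complete if $|T^{\perp}|=3$. Let $\mathcal{P}=\{(x,y')\in P\times P':y'\in x'^{\perp}\}$ and $\mathcal{L}$ the set of all $3$-subsets $\{(x,u'),(y,v'),(z,w')\}$ of $\mathcal{P}$ where $T=\{x,y,z\}$ (three distinct points) is a line or complete triad of $S$ and $\{u',v',w'\}=T'^{\perp}$ in $S'$ with $u',v',w'$ distinct. The geometry $\mathbb{S}=(\mathbb{P},\mathbb{L})$ has point set $\mathbb{P}=\mathcal{P}\cup P\cup P'$ (disjoint union) and line set $\mathcal{L}\cup\{\{x,(x,u'),u'\}:(x,u')\in\mathcal{P}\}$. *)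

(* Defs.v *)
From mathcomp Require Import all_boot.
Set Implicit Arguments. Unset Strict Implicit. Unset Printing Implicit Defensive.

Section Geometry.
Variable T : finType.
Variable Ln : {set {set T}}.

Definition collinear (a b : T) : bool := [exists l in Ln, (a \in l) && (b \in l)].

Definition perp (a : T) : {set T} := [set b | (b == a) || collinear a b].

Definition setperp (A : {set T}) : {set T} := \bigcap_(a in A) perp a.

Definition GQ22 : Prop :=
  [/\ forall l, l \in Ln -> #|l| = 3,
      forall x, #|[set l in Ln | x \in l]| = 3 &
      forall x l, l \in Ln -> x \notin l -> #|[set y in l | collinear x y]| = 1].

Definition triad (A : {set T}) : bool :=
  (#|A| == 3) && [forall a in A, forall b in A, (a != b) ==> ~~ collinear a b].

Definition complete_triad (A : {set T}) : bool := triad A && (#|setperp A| == 3).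
End Geometry.

Section BigS.
Variables (P P' : finType) (L : {set {set P}}) (L' : {set {set P'}}) (f : P -> P').

Definition Pcal : {set P * P'} := [set p | p.2 \in perp L' (f p.1)].

Definition Lcal_set (X : {set P * P'}) : bool :=
  [&& X \subset Pcal, #|X| == 3,
      #|[set p.1 | p in X]| == 3,
      ([set p.1 | p in X] \in L) || complete_triad L [set p.1 | p in X],
      #|[set p.2 | p in X]| == 3 &
      [set p.2 | p in X] == setperp L' [set f p.1 | p in X]].

Definition BQ := ((P * P') + (P + P'))%type.
Definition ptPair (p : P * P') : BQ := inl p.
Definition ptP (x : P) : BQ := inr (inl x).
Definition ptP' (u : P') : BQ := inr (inr u).

Definition bigPoints : {set BQ} :=
  [set ptPair p | p in Pcal] :|: [set ptP x | x : P] :|: [set ptP' u | u : P'].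

Definition bigLines : {set {set BQ}} :=
  [set [set ptPair p | p in X] | X : {set P * P'} & Lcal_set X]
  :|: [set [set ptP p.1; ptPair p; ptP' p.2] | p in Pcal].
End BigS.

(* Main.v *)
Require Import Defs.
From mathcomp Require Import all_boot.
Set Implicit Arguments. Unset Strict Implicit. Unset Printing Implicit Defensive.

Lemma card3 (T : finType) (a b c : T) : a != b -> a != c -> b != c -> #|[set a; b; c]| = 3.
Proof.
move=> ab ac bc.
have -> : [set a; b; c] = a |: (b |: [set c]) by apply/setP => w; rewrite !inE orbA.
by rewrite !cardsU1 cards1 !inE negb_or ab ac bc.
Qed.
Lemma card4 (T : finType) (a b c d : T) : a != b -> a != c -> a != d -> b != c -> b != d -> c != d -> #|[set a; b; c; d]| = 4.
Proof.
move=> ab ac ad bc bd cd.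
have -> : [set a; b; c; d] = a |: (b |: (c |: [set d])) by apply/setP => w; rewrite !inE !orbA.
by rewrite !cardsU1 cards1 !inE !negb_or ab ac ad bc bd cd.
Qed.

Lemma card3P (T : finType) (A : {set T}) v : v \in A -> #|A| = 3 ->
  exists b c, [/\ v != b, v != c, b != c & A = [set v; b; c]].
Proof.
move=> vA cA.
have : #|A :\ v| == 2 by move: cA; rewrite (cardsD1 v A) vA add1n => -[->].
case/cards2P => b [c [bc e]].
have : b \in A :\ v by rewrite e !inE eqxx.
have : c \in A :\ v by rewrite e !inE eqxx orbT.
rewrite !inE => /andP[cv _] /andP[bv _].
exists b, c; split; rewrite ?(eq_sym v) //.
by rewrite -(setD1K vA) e; apply/setP => w; rewrite !inE orbA.
Qed.

Lemma card3E (T : finType) (A : {set T}) : #|A| = 3 ->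
  exists a b c, [/\ a != b, a != c, b != c & A = [set a; b; c]].
Proof.
move=> cA; have : 0 < #|A| by rewrite cA.
case/card_gt0P => a aA; have [b [c [? ? ? ?]]] := card3P aA cA.
by exists a, b, c.
Qed.

Section GQ.
Variables (T : finType) (Ln : {set {set T}}).
Hypothesis H : GQ22 Ln.
Local Notation col := (collinear Ln).

Lemma colP a b : reflect (exists2 l, l \in Ln & (a \in l) && (b \in l)) (col a b).
Proof.
apply: (iffP existsP) => [[l /andP[Hl Hab]]|[l Hl Hab]]; exists l => //.
by rewrite Hl.
Qed.

Lemma colC a b : col a b = col b a.
Proof.
by apply/colP/colP => -[l Hl /andP[? ?]]; exists l => //; apply/andP.
Qed.

Lemma col_refl a : col a a.
Proof.
case: H => _ H2 _; have : 0 < #|[set l in Ln | a \in l]| by rewrite H2.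
case/card_gt0P => l; rewrite inE => /andP[Hl Ha].
by apply/colP; exists l => //; rewrite Ha.
Qed.

Lemma col_in l a b : l \in Ln -> a \in l -> b \in l -> col a b.
Proof. by move=> Hl Ha Hb; apply/colP; exists l => //; rewrite Ha Hb. Qed.

Lemma perpE a b : (b \in perp Ln a) = col a b.
Proof. by rewrite inE; case: eqP => // ->; rewrite col_refl. Qed.

Lemma setperpP (A : {set T}) w : reflect (forall a, a \in A -> col a w) (w \in setperp Ln A).
Proof.
apply: (iffP bigcapP) => Hw a Ha; first by rewrite -perpE; apply: Hw.
by rewrite perpE; apply: Hw.
Qed.

Lemma setperp2 a b w : (w \in setperp Ln [set a; b]) = col a w && col b w.
Proof.
apply/setperpP/andP => [Hw|[Ha Hb] c]; first by split; apply: Hw; rewrite !inE eqxx ?orbT.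
by rewrite !inE => /orP[] /eqP->.
Qed.

Lemma setperp3 a b c w : (w \in setperp Ln [set a; b; c]) = [&& col a w, col b w & col c w].
Proof.
apply/setperpP/and3P => [Hw|[Ha Hb Hc] d]; first by split; apply: Hw; rewrite !inE eqxx ?orbT.
by rewrite !inE -!orbA => /or3P[]/eqP->.
Qed.

Lemma setperpS (A B : {set T}) : A \subset B -> setperp Ln B \subset setperp Ln A.
Proof.
move=> /subsetP sAB; apply/subsetP => w /setperpP Hw; apply/setperpP => a Ha.
exact: Hw (sAB _ Ha).
Qed.

Lemma ax3 l x a b : l \in Ln -> x \notin l -> a \in l -> b \in l -> col x a -> col x b -> a = b.
Proof.
case: H => _ _ H3 Hl Hx Ha Hb Hxa Hxb.
have /cards1P [c Hc] : #|[set y in l | col x y]| == 1 by rewrite H3.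
have : a \in [set c] by rewrite -Hc inE Ha Hxa.
have : b \in [set c] by rewrite -Hc inE Hb Hxb.
by rewrite !inE => /eqP -> /eqP ->.
Qed.

Lemma ax3ex l x : l \in Ln -> x \notin l -> exists2 a, a \in l & col x a.
Proof.
case: H => _ _ H3 Hl Hx.
have /cards1P [c Hc] : #|[set y in l | col x y]| == 1 by rewrite H3.
have : c \in [set y in l | col x y] by rewrite Hc set11.
by rewrite inE => /andP[]; exists c.
Qed.

Lemma line_uniq l m a b : l \in Ln -> m \in Ln -> a != b ->
  a \in l -> b \in l -> a \in m -> b \in m -> l = m.
Proof.
move=> Hl Hm ab al bl am bm; apply/eqP; rewrite eq_sym eqEcard.
case: H => H1 _ _; rewrite H1 // H1 // leqnn andbT.
apply/subsetP => w wm; apply/negPn/negP => wl.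
have := ax3 Hl wl al bl (col_in Hm wm am) (col_in Hm wm bm).
by move/eqP: ab.
Qed.

Lemma notri a b c : col a b -> col b c -> col a c -> a != b ->
  exists2 l, l \in Ln & [&& a \in l, b \in l & c \in l].
Proof.
move=> /colP [l Hl /andP[al bl]] bc ac ab; exists l => //; rewrite al bl /=.
apply/negPn/negP => cl.
rewrite colC in ac; rewrite colC in bc.
have := ax3 Hl cl al bl ac bc.
by move/eqP: ab.
Qed.

Lemma perp2_line l a b : l \in Ln -> a != b -> a \in l -> b \in l ->
  setperp Ln [set a; b] = l.
Proof.
move=> Hl ab al bl; apply/setP => w; rewrite setperp2.
apply/andP/idP => [[aw bw]|wl]; last by split; apply: col_in Hl _ wl.
apply/negPn/negP => wl.
rewrite colC in aw; rewrite colC in bw.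
have := ax3 Hl wl al bl aw bw.
by move/eqP: ab.
Qed.

Lemma setperp_line l : l \in Ln -> setperp Ln l = l.
Proof.
move=> Hl; case: H => H1 _ _.
have : 1 < #|l| by rewrite H1.
case/card_gt1P => a [b [al bl ab]].
apply/eqP; rewrite eqEsubset; apply/andP; split.
  rewrite -{2}(perp2_line Hl ab al bl); apply: setperpS.
  by apply/subsetP => w; rewrite !inE => /orP[]/eqP->.
by apply/subsetP => w wl; apply/setperpP => c cl; apply: col_in Hl cl wl.
Qed.

Lemma col_neq a b : ~~ col a b -> a != b.
Proof. by apply: contra => /eqP->; rewrite col_refl. Qed.

Lemma perp2_card p q : ~~ col p q -> #|setperp Ln [set p; q]| = 3.
Proof.
move=> npq; case: H => H1 H2 H3.
pose Lp := [set l in Ln | p \in l].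
pose psi (l : {set T}) := odflt p [pick w in l | col q w].
have psiP l : l \in Lp -> (psi l \in l) && col q (psi l).
  rewrite inE => /andP[Hl pl].
  have ql : q \notin l by apply: contra npq => ql; apply: col_in Hl pl ql.
  have [a al qa] := ax3ex Hl ql.
  rewrite /psi; case: pickP => [w /andP[-> ->] //|/(_ a)].
  by rewrite al qa.
have eq1 : setperp Ln [set p; q] = psi @: Lp.
  apply/setP => w; rewrite setperp2; apply/andP/imsetP.
    case=> /colP [l Hl /andP[pl wl]] qw.
    have Lpl : l \in Lp by rewrite inE Hl pl.
    exists l => //; have /andP[psil qpsi] := psiP l Lpl.
    have ql : q \notin l by apply: contra npq => ql; apply: col_in Hl pl ql.
    by apply: ax3 Hl ql wl psil qw qpsi.
  case=> l Lpl ->; have /andP[psil qpsi] := psiP l Lpl; split => //.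
  by move: Lpl; rewrite inE => /andP[Hl pl]; apply: col_in Hl pl psil.
rewrite eq1 card_in_imset; first by rewrite H2.
move=> l m Lpl Lpm eqlm.
have /andP[psil qpsi] := psiP l Lpl.
have /andP[psim _] := psiP m Lpm.
move: Lpl Lpm; rewrite !inE => /andP[Hl pl] /andP[Hm pm].
apply: (line_uniq Hl Hm _ pl psil pm) => //; last by rewrite eqlm.
by apply: contraNneq npq => ->; rewrite colC.
Qed.

Lemma perp2_triad p q a b : ~~ col p q -> a \in setperp Ln [set p; q] ->
  b \in setperp Ln [set p; q] -> a != b -> ~~ col a b.
Proof.
rewrite !setperp2 => npq /andP[pa qa] /andP[pb qb] ab; apply/negP.
case/colP => l Hl /andP[al bl].
case pl: (p \in l); last first.
  by have := ax3 Hl (negbT pl) al bl pa pb; move/eqP: ab.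
case ql: (q \in l); last first.
  by have := ax3 Hl (negbT ql) al bl qa qb; move/eqP: ab.
by move/negP: npq; apply; apply: col_in Hl pl ql.
Qed.

Lemma side1 r p a b : col r a -> col r b -> col p a -> col p b -> r != p ->
  ~~ col a b -> ~~ col r p.
Proof.
move=> ra rb pa pb rp nab; apply/negP => crp.
have [l Hl /and3P[rl pl al]] := notri crp pa ra rp.
have [m Hm /and3P[rm pm bm]] := notri crp pb rb rp.
have lm := line_uniq Hl Hm rp rl pl rm pm.
by move/negP: nab; apply; apply: col_in Hl al _; rewrite lm.
Qed.

Lemma side2 l r a s p : l \in Ln -> r \in l -> a \in l -> s \in l -> s != a ->
  col p a -> ~~ col p r -> ~~ col s p.
Proof.
move=> Hl rl al sl sa pa npr; apply/negP => sp.
have [esp|nsp] := eqVneq s p; first by move/negP: npr; apply; rewrite -esp; apply: col_in Hl sl rl.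
have [m Hm /and3P[sm pm am]] := notri sp pa (col_in Hl sl al) nsp.
have lm := line_uniq Hl Hm sa sl al sm am.
by move/negP: npr; apply; apply: col_in Hm pm _; rewrite -lm.
Qed.

Lemma regular p q a b c : ~~ col p q ->
  col p a -> col p b -> col p c -> col q a -> col q b -> col q c ->
  ~~ col a b -> ~~ col a c -> ~~ col b c ->
  exists r, [/\ r != p, r != q, col r a, col r b & col r c].
Proof.
move=> npq pa pb pc qa qb qc nab nac nbc.
have Hc := perp2_card nab.
have : ~~ (setperp Ln [set a; b] \subset [set p; q]).
  apply/negP => /subset_leq_card; rewrite Hc cards2; by case: (p != q).
case/subsetPn => r; rewrite setperp2 => /andP[ar br]; rewrite !inE negb_or => /andP[rp rq].
exists r; split => //; try by rewrite colC.
have [//|nrc] := boolP (col r c).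
rewrite colC in ar; rewrite colC in br.
have nrp := side1 ar br pa pb rp nab.
have nrq := side1 ar br qa qb rq nab.
have ra : r != a by apply: contraNneq nab => <-.
have rb : r != b by apply: contraNneq nab => <-; rewrite colC.
case/colP: ar => la Hla /andP[rla ala].
case/colP: br => lb Hlb /andP[rlb blb].
have cla : c \notin la by apply: contra nac => cl; apply: col_in Hla ala cl.
have clb : c \notin lb by apply: contra nbc => cl; apply: col_in Hlb blb cl.
have [s sla cs] := ax3ex Hla cla.
have [s2 slb cs2] := ax3ex Hlb clb.
have sa : s != a by apply: contraNneq nac => <-; rewrite colC.
have sr : s != r by apply: contraNneq nrc => <-; rewrite colC.
have s2b : s2 != b by apply: contraNneq nbc => <-; rewrite colC.
have s2r : s2 != r by apply: contraNneq nrc => <-; rewrite colC.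
rewrite colC in nrp; rewrite colC in nrq.
have nsp := side2 Hla rla ala sla sa pa nrp.
have nsq := side2 Hla rla ala sla sa qa nrq.
have ns2p := side2 Hlb rlb blb slb s2b pb nrp.
have ns2q := side2 Hlb rlb blb slb s2b qb nrq.
have lalb : la != lb.
  apply: contraNneq nab => e; apply: col_in Hla ala _; by rewrite e.
have nss2 : ~~ col s s2.
  apply/negP => css2.
  have [es|ss2] := eqVneq s s2.
    rewrite -es in slb.
    by move/negP: lalb; apply; apply/eqP; apply: (line_uniq Hla Hlb sr).
  have [m Hm /and3P[sm s2m rm]] := notri css2 (col_in Hlb slb rlb) (col_in Hla sla rla) ss2.
  have e1 := line_uniq Hla Hm sr sla rla sm rm.
  have e2 := line_uniq Hlb Hm s2r slb rlb s2m rm.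
  by move/negP: lalb; rewrite e1 e2.
rewrite colC in pc; rewrite colC in qc.
case/colP: pc => lp Hlp /andP[clp plp].
case/colP: qc => lq Hlq /andP[clq qlq].
case/colP: cs => ls Hls /andP[cls sls].
case/colP: cs2 => ls2 Hls2 /andP[cls2 s2ls2].
have d1 : lp != lq by apply: contraNneq npq => e; apply: col_in Hlq _ qlq; rewrite -e.
have d2 : lp != ls by apply: contraNneq nsp => e; apply: col_in Hls sls _; rewrite -e.
have d3 : lp != ls2 by apply: contraNneq ns2p => e; apply: col_in Hls2 s2ls2 _; rewrite -e.
have d4 : lq != ls by apply: contraNneq nsq => e; apply: col_in Hls sls _; rewrite -e.
have d5 : lq != ls2 by apply: contraNneq ns2q => e; apply: col_in Hls2 s2ls2 _; rewrite -e.
have d6 : ls != ls2 by apply: contraNneq nss2 => e; apply: col_in Hls2 _ s2ls2; rewrite -e.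
have : [set lp; lq; ls; ls2] \subset [set l in Ln | c \in l].
  apply/subsetP => l; rewrite !inE -!orbA => /or4P[] /eqP->; by apply/andP.
move/subset_leq_card; rewrite card4 //; case: H => _ -> _; by [].
Qed.

Lemma triad3 a b c : ~~ col a b -> ~~ col a c -> ~~ col b c -> triad Ln [set a; b; c].
Proof.
move=> ab ac bc; apply/andP; split.
  by rewrite card3 // col_neq.
apply/forall_inP => x xin; apply/forall_inP => y yin; apply/implyP.
move: xin yin; rewrite !inE -!orbA => /or3P[]/eqP-> /or3P[]/eqP->; rewrite ?eqxx //= => _;
  first [done | rewrite colC; done].
Qed.

Lemma core (p q : T) : p != q -> exists B : {set T},
  [/\ p \in B, q \in B, #|B| = 3, (B \in Ln) || complete_triad Ln B &
  setperp Ln B = setperp Ln [set p; q]] /\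
  [/\ (setperp Ln [set p; q] \in Ln) || complete_triad Ln (setperp Ln [set p; q]),
      #|setperp Ln [set p; q]| = 3 & setperp Ln (setperp Ln [set p; q]) = B].
Proof.
move=> pq; case: H => H1 H2 H3.
have [cpq|npq] := boolP (col p q).
  case/colP: cpq => l Hl /andP[pl ql].
  exists l; rewrite (perp2_line Hl pq pl ql) setperp_line // Hl H1 //.
have cD := perp2_card npq.
have [a [b [c [ab ac bc eD]]]] := card3E cD.
have inD w : w \in [set a; b; c] -> col p w && col q w by rewrite -eD setperp2.
have ain : a \in [set a; b; c] by rewrite !inE eqxx.
have bin : b \in [set a; b; c] by rewrite !inE eqxx orbT.
have cin : c \in [set a; b; c] by rewrite !inE eqxx !orbT.
have /andP[pa qa] := inD a ain.
have /andP[pb qb] := inD b bin.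
have /andP[pc qc] := inD c cin.
have tr x y : x \in [set a; b; c] -> y \in [set a; b; c] -> x != y -> ~~ col x y.
  by rewrite -eD; apply: perp2_triad.
have nab := tr a b ain bin ab.
have nac := tr a c ain cin ac.
have nbc := tr b c bin cin bc.
have [r [rp rq ra rb rc]] := regular npq pa pb pc qa qb qc nab nac nbc.
have nrp := side1 ra rb pa pb rp nab.
have nrq := side1 ra rb qa qb rq nab.
have eB : setperp Ln [set p; q; r] = setperp Ln [set p; q].
  apply/setP => w; rewrite setperp3.
  apply/idP/idP => [/and3P[pw qw _]|wD]; first by rewrite setperp2 pw qw.
  move: (wD); rewrite eD !inE -!orbA => /or3P[] /eqP ->.
  - by rewrite pa qa ra.
  - by rewrite pb qb rb.
  - by rewrite pc qc rc.
have Bc : #|[set p; q; r]| = 3 by rewrite card3 // eq_sym.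
have eAB : setperp Ln [set a; b] = [set p; q; r].
  apply/eqP; rewrite eq_sym eqEcard Bc perp2_card // leqnn andbT.
  apply/subsetP => w; rewrite !inE -!orbA setperp2 => /or3P[]/eqP->;
    apply/andP; split; rewrite colC //.
have eB2 : setperp Ln [set a; b; c] = [set p; q; r].
  apply/eqP; rewrite eqEsubset; apply/andP; split.
    rewrite -eAB; apply: setperpS; apply/subsetP => w.
    by rewrite !inE => /orP[]/eqP->; rewrite eqxx ?orbT.
  apply/subsetP => w; rewrite !inE -!orbA setperp3 => /or3P[]/eqP->;
    apply/and3P; split; rewrite colC //.
have npr : ~~ col p r by rewrite colC.
have nqr : ~~ col q r by rewrite colC.
exists [set p; q; r]; split; split.
- by rewrite !inE eqxx.
- by rewrite !inE eqxx orbT.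
- exact: Bc.
- by apply/orP; right; rewrite /complete_triad triad3 //= eB cD.
- exact: eB.
- by rewrite eD; apply/orP; right; rewrite /complete_triad triad3 //= eB2 Bc.
- exact: cD.
- by rewrite eD eB2.
Qed.

End GQ.

Lemma perm3 (T : finType) (a b c a' b' c' : T) :
  [set a'; b'; c'] = [set a; b; c] -> forall w, (w \in [set a; b; c]) = (w \in [set a'; b'; c']).
Proof. by move=> ->. Qed.

Lemma imset3 (A B : finType) (h : A -> B) a b c : h @: [set a; b; c] = [set h a; h b; h c].
Proof. by rewrite ?imsetU1 ?imsetU !imset_set1. Qed.

Lemma imset3' (A B : finType) (h : A -> B) a b c :
  [set h x | x in [set a; b; c]] = [set h a; h b; h c].
Proof. exact: imset3. Qed.

Lemma setperp2b (T : finType) (Ln : {set {set T}}) a b w :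
  collinear Ln a w -> collinear Ln b w -> w \in setperp Ln [set a; b].
Proof.
move=> aw bw; apply/bigcapP => c; rewrite !inE => /orP[]/eqP->; apply/orP; right => //.
Qed.

Lemma third (T : finType) (B : {set T}) p q : p \in B -> q \in B -> p != q -> #|B| = 3 ->
  exists r, [/\ p != r, q != r & B = [set p; q; r]].
Proof.
move=> pB qB pq cB; have [b [c [pb pc bc eB]]] := card3P pB cB.
move: qB; rewrite eB !inE -!orbA => /or3P[]/eqP qe.
- by rewrite qe eqxx in pq.
- by exists c; rewrite qe.
- exists b; rewrite qe; split; [done | by rewrite eq_sym | ].
  by apply/setP => w; rewrite !inE; case: (w == p) (w == b) (w == c) => [] [] [].
Qed.

Section Big.
Variables (P P' : finType) (L : {set {set P}}) (L' : {set {set P'}}) (f : P -> P') (g : P' -> P).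
Hypotheses (HS : GQ22 L) (HS' : GQ22 L') (fK : cancel f g) (gK : cancel g f)
  (Hiso : forall l : {set P}, (f @: l \in L') = (l \in L)).

Lemma finj : injective f. Proof. exact: can_inj fK. Qed.

Lemma colf a b : collinear L' (f a) (f b) = collinear L a b.
Proof.
apply/colP/colP => [[l' Hl' /andP[al bl]]|[l Hl /andP[al bl]]].
  have e : f @: (g @: l') = l'.
    by rewrite -imset_comp (eq_imset _ gK) imset_id.
  exists (g @: l'); first by rewrite -Hiso e.
  by rewrite -(fK a) -(fK b) !imset_f.
by exists (f @: l); rewrite ?Hiso // !imset_f.
Qed.

Lemma setperpf (A : {set P}) : setperp L' (f @: A) = f @: setperp L A.
Proof.
apply/setP => w; rewrite -{2}(gK w) mem_imset; last exact: finj.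
apply/(setperpP HS' _ _)/(setperpP HS _ _) => Hw a Ha.
  by rewrite -colf gK; apply: Hw; apply: imset_f.
by case/imsetP: Ha => a0 Ha0 ->; rewrite -(gK w) colf; apply: Hw.
Qed.

Lemma transfer (A : {set P}) : (f @: A \in L') || complete_triad L' (f @: A) ->
  (A \in L) || complete_triad L A.
Proof.
rewrite Hiso; case/orP => [->//|/andP[/andP[c3 tr] c3']]; apply/orP; right.
rewrite card_imset in c3; last exact: finj.
rewrite setperpf card_imset in c3'; last exact: finj.
rewrite /complete_triad /triad c3 c3' andbT /=.
apply/forall_inP => a Ha; apply/forall_inP => b Hb; apply/implyP => ab.
move/forall_inP: tr => /(_ (f a) (imset_f _ Ha)) /forall_inP /(_ (f b) (imset_f _ Hb)).
by rewrite (inj_eq finj) ab colf.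
Qed.

Lemma Lcal3 x1 x2 x3 u1 u2 u3 :
  x1 != x2 -> x1 != x3 -> x2 != x3 -> u1 != u2 -> u1 != u3 -> u2 != u3 ->
  collinear L' (f x1) u1 -> collinear L' (f x2) u2 -> collinear L' (f x3) u3 ->
  (f @: [set x1; x2; x3] \in L') || complete_triad L' (f @: [set x1; x2; x3]) ->
  [set u1; u2; u3] = setperp L' [set f x1; f x2; f x3] ->
  collinear (bigLines L L' f) (ptPair (x1, u1)) (ptPair (x2, u2)).
Proof.
move=> x12 x13 x23 u12 u13 u23 c1 c2 c3 tr ep.
set X := [set (x1, u1); (x2, u2); (x3, u3)].
have ne (a b : P) (c d : P') : a != b -> (a, c) != (b, d).
  by move=> ab; apply: contraNneq ab => -[-> _].
have LX : Lcal_set L L' f X.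
  rewrite /Lcal_set imset3' imset3' imset3' /= card3 // card3 // ep eqxx (transfer tr) /=.
  rewrite eqxx andbT /X card3 ?ne // andbT.
  apply/subsetP => w; rewrite !inE -!orbA => /or3P[]/eqP->; by rewrite /= ?c1 ?c2 ?c3 orbT.
apply: (col_in (l := [set ptPair p | p in X])).
- by rewrite inE; apply/orP; left; apply/imsetP; exists X; rewrite ?inE.
- by apply: imset_f; rewrite !inE eqxx.
- by apply: imset_f; rewrite !inE eqxx orbT.
Qed.

Lemma colpair x u : collinear L' (f x) u ->
  [/\ collinear (bigLines L L' f) (ptP P' x) (ptPair (x, u)),
  collinear (bigLines L L' f) (ptP' P u) (ptPair (x, u)) &
  collinear (bigLines L L' f) (ptP P' x) (ptP' P u)].
Proof.
move=> xu.
have Hl : [set ptP P' x; ptPair (x, u); ptP' P u] \in bigLines L L' f.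
  rewrite inE; apply/orP; right; apply/imsetP; exists (x, u) => //.
  by rewrite inE /= perpE.
by split; apply: (col_in Hl); rewrite !inE eqxx ?orbT.
Qed.

End Big.

Unset Implicit Arguments.
Theorem lemma4p3 (P P' : finType) (L : {set {set P}}) (L' : {set {set P'}})
    (f : P -> P')
    (HS : GQ22 L) (HS' : GQ22 L')
    (Hbij : bijective f)
    (Hiso : forall l : {set P}, (f @: l \in L') = (l \in L)) :
  (forall (x y : P) (v' : P'),
      (y, v') \in Pcal L' f -> x != y -> v' \in perp L' (f x) ->
      3 <= #|setperp (bigLines L L' f) [set ptP P' x; ptPair (y, v')]|)
  /\
  (forall (u' v' : P') (y u : P),
      f u = u' ->
      (y, v') \in Pcal L' f -> u' != v' -> y \in perp L u ->
      3 <= #|setperp (bigLines L L' f) [set ptP' P u'; ptPair (y, v')]|).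
Proof.
case: Hbij => g fK gK.
have fi := finj fK.
have ptne (a b : P) (c d : P') : (a, c) != (b, d) -> ptPair (a, c) != ptPair (b, d).
  move=> h; apply/eqP; rewrite /ptPair => -[ea ec]; by rewrite ea ec eqxx in h.
have ne1 (a b : P) (c d : P') : a != b -> (a, c) != (b, d).
  by move=> ab; apply: contraNneq ab => -[-> _].
have ne2 (a b : P) (c d : P') : c != d -> (a, c) != (b, d).
  by move=> ab; apply: contraNneq ab => -[_ ->].
split.
- move=> x y v Hyv xy vx.
  have cyv : collinear L' (f y) v by move: Hyv; rewrite inE /= (perpE HS').
  have cxv : collinear L' (f x) v by rewrite -(perpE HS').
  have pq : f x != f y by rewrite (inj_eq fi).
  have [B [[pB qB cB tB eB] [tD cD eDD]]] := core HS' pq.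
  have vD : v \in setperp L' [set f x; f y] by rewrite (setperp2 HS') cxv cyv.
  have [a1 [a2 [va1 va2 a12 eD]]] := card3P vD cD.
  have [r [xr yr eBr]] := third pB qB pq cB.
  have a1D : a1 \in setperp L' [set f x; f y] by rewrite eD !inE eqxx ?orbT.
  have a2D : a2 \in setperp L' [set f x; f y] by rewrite eD !inE eqxx ?orbT.
  have cxa1 : collinear L' (f x) a1 by move: a1D; rewrite (setperp2 HS') => /andP[].
  have cxa2 : collinear L' (f x) a2 by move: a2D; rewrite (setperp2 HS') => /andP[].
  have rB : r \in B by rewrite eBr !inE eqxx ?orbT.
  have cra1 : collinear L' r a1 by move: a1D; rewrite -eB => /(setperpP HS'); apply.
  have cra2 : collinear L' r a2 by move: a2D; rewrite -eB => /(setperpP HS'); apply.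
  set z := g r.
  have fz : f z = r by rewrite /z gK.
  have xz : x != z by apply: contraNneq xr => ->; rewrite fz.
  have yz : y != z by apply: contraNneq yr => ->; rewrite fz.
  have tr : (f @: [set x; y; z] \in L') || complete_triad L' (f @: [set x; y; z]).
    by rewrite imset3 fz -eBr.
  have eS : setperp L' [set f x; f y; f z] = [set v; a1; a2] by rewrite fz -eBr eB eD.
  have e1 : [set a1; v; a2] = setperp L' [set f x; f y; f z].
    by rewrite eS; apply/setP => w; rewrite !inE; case: (w == a1) (w == v) (w == a2) => [] [] [].
  have e2 : [set a2; v; a1] = setperp L' [set f x; f y; f z].
    by rewrite eS; apply/setP => w; rewrite !inE; case: (w == a1) (w == v) (w == a2) => [] [] [].
  have a1v : a1 != v by rewrite eq_sym.
  have a2v : a2 != v by rewrite eq_sym.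
  have a21 : a2 != a1 by rewrite eq_sym.
  have cza2 : collinear L' (f z) a2 by rewrite fz.
  have cza1 : collinear L' (f z) a1 by rewrite fz.
  have c1 := Lcal3 HS HS' fK gK Hiso xy xz yz a1v a12 va2 cxa1 cyv cza2 tr e1.
  have c2 := Lcal3 HS HS' fK gK Hiso xy xz yz a2v a21 va1 cxa2 cyv cza1 tr e2.
  have [px1 _ _] := colpair L HS' cxa1.
  have [px2 _ _] := colpair L HS' cxa2.
  have [_ _ pxv] := colpair L HS' cxv.
  have [_ pyv _] := colpair L HS' cyv.
  have sub : [set ptPair (x, a1); ptPair (x, a2); ptP' P v] \subset
      setperp (bigLines L L' f) [set ptP P' x; ptPair (y, v)].
    apply/subsetP => w; rewrite !inE -!orbA => /or3P[]/eqP->.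
    - by apply: setperp2b; [exact: px1 | rewrite colC; exact: c1].
    - by apply: setperp2b; [exact: px2 | rewrite colC; exact: c2].
    - by apply: setperp2b; [exact: pxv | rewrite colC; exact: pyv].
  apply: leq_trans (subset_leq_card sub).
  rewrite card3.
  - exact: leqnn.
  - by apply: ptne; apply: ne2.
  - by apply/eqP; rewrite /ptPair /ptP' => h; discriminate h.
  - by apply/eqP; rewrite /ptPair /ptP' => h; discriminate h.
- move=> u' v' y u fu Hyv uv yu.
  have cyv : collinear L' (f y) v' by move: Hyv; rewrite inE /= (perpE HS').
  have cuy : collinear L' u' (f y) by rewrite -fu (colf fK gK Hiso) -(perpE HS).
  have cyu : collinear L' (f y) u' by rewrite colC.
  have [B [[uB vB cB tB eB] [tD cD eDD]]] := core HS' uv.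
  have yD : f y \in setperp L' [set u'; v'] by rewrite (setperp2 HS') cuy colC cyv.
  have [a1 [a2 [ya1 ya2 a12 eD]]] := card3P yD cD.
  have [t [ut vt eBt]] := third uB vB uv cB.
  have a1D : a1 \in setperp L' [set u'; v'] by rewrite eD !inE eqxx ?orbT.
  have a2D : a2 \in setperp L' [set u'; v'] by rewrite eD !inE eqxx ?orbT.
  have cua1 : collinear L' a1 u' by move: a1D; rewrite (setperp2 HS') colC => /andP[].
  have cua2 : collinear L' a2 u' by move: a2D; rewrite (setperp2 HS') colC => /andP[].
  have tinB : t \in B by rewrite eBt !inE eqxx ?orbT.
  have ct1 : collinear L' a1 t by move: tinB; rewrite -eDD => /(setperpP HS'); apply.
  have ct2 : collinear L' a2 t by move: tinB; rewrite -eDD => /(setperpP HS'); apply.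
  set w1 := g a1. set w2 := g a2.
  have fw1 : f w1 = a1 by rewrite /w1 gK.
  have fw2 : f w2 = a2 by rewrite /w2 gK.
  have w1y : w1 != y by apply: contraNneq ya1 => <-; rewrite fw1.
  have w2y : w2 != y by apply: contraNneq ya2 => <-; rewrite fw2.
  have yw1 : y != w1 by rewrite eq_sym.
  have yw2 : y != w2 by rewrite eq_sym.
  have w12 : w1 != w2 by apply: contraNneq a12 => e; rewrite -fw1 -fw2 e.
  have w21 : w2 != w1 by rewrite eq_sym.
  have p1 : [set a1; f y; a2] = setperp L' [set u'; v'].
    by rewrite eD; apply/setP => w; rewrite !inE; case: (w == a1) (w == f y) (w == a2) => [] [] [].
  have p2 : [set a2; f y; a1] = setperp L' [set u'; v'].
    by rewrite eD; apply/setP => w; rewrite !inE; case: (w == a1) (w == f y) (w == a2) => [] [] [].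
  have tr1 : (f @: [set w1; y; w2] \in L') || complete_triad L' (f @: [set w1; y; w2]).
    by rewrite imset3 fw1 fw2 p1.
  have tr2 : (f @: [set w2; y; w1] \in L') || complete_triad L' (f @: [set w2; y; w1]).
    by rewrite imset3 fw1 fw2 p2.
  have e1 : [set u'; v'; t] = setperp L' [set f w1; f y; f w2] by rewrite fw1 fw2 p1 eDD eBt.
  have e2 : [set u'; v'; t] = setperp L' [set f w2; f y; f w1] by rewrite fw1 fw2 p2 eDD eBt.
  have cw1u : collinear L' (f w1) u' by rewrite fw1.
  have cw2u : collinear L' (f w2) u' by rewrite fw2.
  have cw1t : collinear L' (f w1) t by rewrite fw1.
  have cw2t : collinear L' (f w2) t by rewrite fw2.
  have c1 := Lcal3 HS HS' fK gK Hiso w1y w12 yw2 uv ut vt cw1u cyv cw2t tr1 e1.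
  have c2 := Lcal3 HS HS' fK gK Hiso w2y w21 yw1 uv ut vt cw2u cyv cw1t tr2 e2.
  have [_ pu1 _] := colpair L HS' cw1u.
  have [_ pu2 _] := colpair L HS' cw2u.
  have [_ _ pyu] := colpair L HS' cyu.
  have [pyv _ _] := colpair L HS' cyv.
  have sub : [set ptPair (w1, u'); ptPair (w2, u'); ptP P' y] \subset
      setperp (bigLines L L' f) [set ptP' P u'; ptPair (y, v')].
    apply/subsetP => w; rewrite !inE -!orbA => /or3P[]/eqP->.
    - by apply: setperp2b; [exact: pu1 | rewrite colC; exact: c1].
    - by apply: setperp2b; [exact: pu2 | rewrite colC; exact: c2].
    - by apply: setperp2b; rewrite colC; [exact: pyu | exact: pyv].
  apply: leq_trans (subset_leq_card sub).
  rewrite card3.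
  - exact: leqnn.
  - by apply: ptne; apply: ne1.
  - by apply/eqP; rewrite /ptPair /ptP => h; discriminate h.
  - by apply/eqP; rewrite /ptPair /ptP => h; discriminate h.
Qed.
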